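(* Let $M$ be a quasi-pseudo principally injective right $R$-module. Then $M$ is continuous if and only if $M$ is quasi-continuous.
   Context: All rings are associative with identity and all modules are unitary right $R$-modules. A submodule $N$ of $M$ is called $M$-cyclic if $N\cong M/L$ for some submodule $L$ of $M$ (equivalently, $N$ is the image of an endomorphism of $M$). $M$ is quasi-pseudo principally injective if for every $M$-cyclic submodule $A$ of $M$, every $R$-monomorphism $A\to M$ extends to an $R$-endomorphism of $M$. Conditions: (C$_1$) every submodule of $M$ is essential in a direct summand of $M$; (C$_2$) every submodule of $M$ isomorphic to a direct summand of $M$ is itself a direct summand of $M$; (C$_3$) if $A,B$ are direct summands of $M$ with $A\cap B=0$ then $A\oplus B$ is a direct summand of $M$. $M$ is continuous if it satisfies (C$_1$) and (C$_2$), and quasi-continuous if it satisfies (C$_1$) and (C$_3$). *)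

(* Defs.v *)
(* Right R-modules over an arbitrary (associative, unital)
   ring R are modelled as left modules over the converse ring R^c:
   for M : lmodType R^c and a : R, the right action m.a is  a *: m. *)
From HB Require Import structures.
From mathcomp Require Import all_boot all_order all_algebra.
Set Implicit Arguments. Unset Strict Implicit. Unset Printing Implicit Defensive.
Import GRing.Theory.
Local Open Scope ring_scope.

Section Modules.
Variables (R : pzRingType) (M : lmodType R^c).

(* Submodules are predicates (modules may be infinite). *)
Definition submodule (N : M -> Prop) : Prop :=
  [/\ N 0, (forall x y, N x -> N y -> N (x + y))
     & (forall (a : R^c) x, N x -> N (a *: x))].

Definition subset_of (A B : M -> Prop) : Prop := forall x, A x -> B x.

Definition endo (f : M -> M) : Prop :=
  (forall x y, f (x + y) = f x + f y) /\ (forall (a : R^c) x, f (a *: x) = a *: f x).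

(* An R-homomorphism from the submodule A into M, given as a map on M
   whose behaviour on A is what matters. *)
Definition hom_on (A : M -> Prop) (f : M -> M) : Prop :=
  (forall x y, A x -> A y -> f (x + y) = f x + f y) /\
  (forall (a : R^c) x, A x -> f (a *: x) = a *: f x).

Definition mono_on (A : M -> Prop) (f : M -> M) : Prop :=
  hom_on A f /\ (forall x y, A x -> A y -> f x = f y -> x = y).

Definition iso_sub (A B : M -> Prop) : Prop :=
  exists f : M -> M, [/\ mono_on A f, (forall x, A x -> B (f x))
                       & (forall y, B y -> exists2 x, A x & f x = y)].

(* N is M-cyclic: N is the image of an endomorphism of M
   (equivalently N ~ M/L for a submodule L). *)
Definition M_cyclic (N : M -> Prop) : Prop :=
  submodule N /\ exists f : M -> M, endo f /\ (forall y, N y <-> exists x, f x = y).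

Definition qppi : Prop :=
  forall A : M -> Prop, M_cyclic A ->
  forall g : M -> M, mono_on A g ->
  exists h : M -> M, endo h /\ (forall x, A x -> h x = g x).

Definition direct_summand (A : M -> Prop) : Prop :=
  submodule A /\ exists B : M -> Prop,
    [/\ submodule B, (forall x, A x -> B x -> x = 0)
      & (forall m, exists a b, [/\ A a, B b & m = a + b])].

Definition essential_in (A B : M -> Prop) : Prop :=
  subset_of A B /\
  forall C : M -> Prop, submodule C -> subset_of C B ->
    (forall x, C x -> A x -> x = 0) -> forall x, C x -> x = 0.

Definition C1 : Prop :=
  forall A, submodule A -> exists2 D, direct_summand D & essential_in A D.

Definition C2 : Prop :=
  forall A D, submodule A -> direct_summand D -> iso_sub A D -> direct_summand A.

Definition C3 : Prop :=
  forall A B, direct_summand A -> direct_summand B ->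
    (forall x, A x -> B x -> x = 0) ->
    direct_summand (fun m => exists a b, [/\ A a, B b & m = a + b]).

Definition continuous : Prop := C1 /\ C2.
Definition quasi_continuous : Prop := C1 /\ C3.

End Modules.

(* Main.v *)
Require Import Defs.
From mathcomp Require Import all_boot all_order all_algebra.
From Stdlib Require Import ClassicalEpsilon.
Set Implicit Arguments. Unset Strict Implicit.
Import GRing.Theory.
Local Open Scope ring_scope.
Section S.
Variables (R : pzRingType) (M : lmodType R^c).
Implicit Types (X Y : M -> Prop) (f g : M -> M).

Lemma sub_add X x y : submodule X -> X x -> X y -> X (x + y).
Proof. by case=> _ H _; apply: H. Qed.
Lemma sub_scal X (c : R^c) x : submodule X -> X x -> X (c *: x).
Proof. by case=> _ _ H; apply: H. Qed.
Lemma sub0 X : submodule X -> X 0.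
Proof. by case. Qed.

Lemma sub_opp X x : submodule X -> X x -> X (- x).
Proof. by case=> _ _ HZ Hx; rewrite -scaleN1r; apply: HZ. Qed.
Lemma sub_sub X x y : submodule X -> X x -> X y -> X (x - y).
Proof. move=> HX Hx Hy; case: (HX) => _ HD _; exact: HD _ _ Hx (sub_opp HX Hy). Qed.

Lemma eq_decomp X Y x y x' y' : submodule X -> submodule Y ->
  (forall z, X z -> Y z -> z = 0) -> X x -> Y y -> X x' -> Y y' ->
  x + y = x' + y' -> x = x'.
Proof.
move=> HX HY H0 Hx Hy Hx' Hy' E.
have e : x - x' = y' - y.
  have -> : x = x' + y' - y by rewrite -E addrK.
  by rewrite addrAC [x' + y']addrC addrK.
apply/eqP; rewrite -subr_eq0; apply/eqP; apply: H0; first exact: sub_sub.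
by rewrite e; exact: sub_sub.
Qed.

Definition comp X Y (m : M) : M :=
  epsilon (inhabits (0:M)) (fun x => exists y, X x /\ Y y /\ m = x + y).

Lemma compE X Y x y m : submodule X -> submodule Y ->
  (forall z, X z -> Y z -> z = 0) -> X x -> Y y -> m = x + y -> comp X Y m = x.
Proof.
move=> HX HY H0 Hx Hy Em.
have ex : exists x, exists y, X x /\ Y y /\ m = x + y by exists x, y.
have [y' [Hx' [Hy' E']]] := epsilon_spec (inhabits (0:M)) _ ex.
rewrite -/(comp X Y m) in Hx' E'.
by apply: (eq_decomp HX HY H0 Hx' Hy' Hx Hy); rewrite -E'.
Qed.

Definition inv (A : M -> Prop) (f : M -> M) (y : M) : M :=
  epsilon (inhabits (0:M)) (fun x => A x /\ f x = y).

Lemma invP A f y : (exists2 x, A x & f x = y) -> A (inv A f y) /\ f (inv A f y) = y.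
Proof. by case=> x Ax fx; apply: (epsilon_spec (inhabits (0:M)) (fun x => A x /\ f x = y)); exists x. Qed.

Lemma endo0 f : endo f -> f 0 = 0.
Proof. by case=> _ Hs; have := Hs 0 0; rewrite !scale0r. Qed.
Lemma endoN f x : endo f -> f (- x) = - f x.
Proof. by case=> _ Hs; rewrite -scaleN1r Hs scaleN1r. Qed.
Lemma endoB f x y : endo f -> f (x - y) = f x - f y.
Proof. by move=> He; case: (He) => Ha _; rewrite Ha endoN. Qed.
Lemma endo_comp f g : endo f -> endo g -> endo (fun x => f (g x)).
Proof. by move=> [fa fs] [ga gs]; split=> *; rewrite ?ga ?fa ?gs ?fs. Qed.

Lemma qc_C2 : qppi M -> C1 M -> C2 M.
Proof.
move=> Hq H1 A D HA [HD [D' [HD' H0 Hdec]]] [f [[[fadd fscal] finj] fAD fonto]].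
pose p := comp D D'.
have pE : forall a b, D a -> D' b -> p (a + b) = a.
  by move=> a b Ha Hb; rewrite /p; apply: (compE HD HD' H0 Ha Hb).
have pD : forall m, D (p m).
  by move=> m; have [a [b [Ha Hb ->]]] := Hdec m; rewrite pE.
have pid : forall x, D x -> p x = x.
  move=> x Hx; have D0 : D' 0 by case: HD'.
  by rewrite -{1}[x]addr0 pE.
have pendo : endo p.
  split.
    move=> x y; have [a [b [Ha Hb ->]]] := Hdec x; have [a' [b' [Ha' Hb' ->]]] := Hdec y.
    rewrite addrACA !pE //; by [apply: (sub_add HD') | apply: (sub_add HD)].
  move=> c x; have [a [b [Ha Hb ->]]] := Hdec x.
  rewrite scalerDr !pE //; by [apply: (sub_scal _ HD') | apply: (sub_scal _ HD)].
pose g := inv A f.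
have gP : forall y, D y -> A (g y) /\ f (g y) = y.
  by move=> y Hy; apply: invP; apply: fonto.
have gmono : mono_on D g.
  split; last first.
    by move=> x y Hx Hy E; rewrite -(gP x Hx).2 -(gP y Hy).2 E.
  split.
    move=> x y Hx Hy; apply: finj.
    - by apply: (gP _ _).1; apply: (sub_add HD).
    - by apply: (sub_add HA); [exact: (gP _ Hx).1 | exact: (gP _ Hy).1].
    rewrite fadd; [|exact: (gP _ Hx).1|exact: (gP _ Hy).1].
    rewrite (gP _ Hx).2 (gP _ Hy).2; apply: (gP _ _).2; by apply: (sub_add HD).
  move=> c x Hx; apply: finj.
  - by apply: (gP _ _).1; apply: (sub_scal _ HD).
    - by apply: (sub_scal _ HA); case: (gP _ Hx).
  rewrite fscal; last exact: (gP _ Hx).1.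
  rewrite (gP _ Hx).2; apply: (gP _ _).2; by apply: (sub_scal _ HD).
have Dcyc : M_cyclic D.
  split=> //; exists p; split=> // y; split; first by move=> Hy; exists y; rewrite pid.
  by case=> x <-.
have [h [hendo hg]] := Hq D Dcyc g gmono.
have Acyc : M_cyclic A.
  split=> //; exists (fun x => h (p x)); split; first exact: endo_comp.
  move=> y; split.
    move=> Hy; exists (f y); rewrite pid; last exact: fAD.
    rewrite hg; last exact: fAD.
    have [Hg1 Hg2] := gP (f y) (fAD _ Hy).
    by apply: finj.
  by case=> x <-; rewrite hg //; exact: (gP _ (pD x)).1.
have [k [kendo kf]] := Hq A Acyc f (conj (conj fadd fscal) finj).
have [E HE [sub ess]] := H1 A HA.
have f0 : f 0 = 0.
  have A0 : A 0 by case: HA.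
  by have := fscal 0 0 A0; rewrite !scale0r.
have EA : forall e, E e -> A e.
  move=> e He.
  have [a Ha fa] := fonto _ (pD (k e)).
  pose C := fun x => E x /\ p (k x) = 0.
  have pk := endo_comp pendo kendo.
  have HE' : submodule E by case: HE.
  have HC : submodule C.
    split.
    - by split; [case: HE' | exact: (endo0 pk)].
    - move=> x y [Ex px] [Ey py]; split; first by apply: (sub_add HE').
      by case: pk => -> _; rewrite px py addr0.
    - move=> c x [Ex px]; split; first by apply: (sub_scal _ HE').
      by case: pk => _ Hs; rewrite Hs px scaler0.
  have Cea : C (e - a).
    split; first by apply: sub_sub => //; exact: sub.
    rewrite (endoB _ _ pk) (kf _ Ha) (pid (f a)); last exact: fAD.
    by rewrite fa subrr.
  suff : forall x, C x -> A x -> x = 0.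
    by move/(ess C HC (fun x (H : C x) => proj1 H))/(_ _ Cea)/subr0_eq ->.
  move=> x [Ex px] Ax; apply: finj => //; first by case: HA.
  by rewrite f0 -px kf // pid //; exact: fAD.
case: HE => _ [B [HB H0E HdE]].
split=> //; exists B; split=> //.
  by move=> x Ax Bx; apply: H0E => //; exact: sub.
move=> m; have [a [b [Ea Bb ->]]] := HdE m; exists a, b; split=> //; exact: EA.
Qed.

Lemma C2_C3 : C2 M -> C3 M.
Proof.
move=> H2 A B [HA [A' [HA' HAA' HdA]]] HBs H0.
have HB := HBs.1.
pose P := fun y => A' y /\ exists b a, [/\ B b, A a & y = b + a].
pose f := comp B A.
have HBA : forall z, B z -> A z -> z = 0 by move=> z Bz Az; exact: H0.
have HA'A : forall z, A' z -> A z -> z = 0 by move=> z A'z Az; exact: HAA'.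
have fE : forall b a, B b -> A a -> f (b + a) = b.
  by move=> b a Hb Ha; rewrite /f; apply: (compE HB HA HBA Hb Ha).
have HP : submodule P.
  split.
  - split; first exact: sub0.
    by exists 0, 0; split; rewrite ?addr0 //; exact: sub0.
  - move=> x y [A'x [b [a [Hb Ha Ex]]]] [A'y [b' [a' [Hb' Ha' Ey]]]]; subst x y.
    split; first exact: (sub_add HA' A'x A'y).
    exists (b + b'), (a + a'); split; [exact: (sub_add HB)|exact: (sub_add HA)|].
    by rewrite addrACA.
  - move=> c x [A'x [b [a [Hb Ha Ex]]]]; subst x.
    split; first exact: (sub_scal _ HA').
    exists (c *: b), (c *: a); split; [exact: (sub_scal _ HB)|exact: (sub_scal _ HA)|].
    by rewrite scalerDr.
have Hiso : iso_sub P B.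
  exists f; split.
  - split.
      split.
        move=> x y [A'x [b [a [Hb Ha Ex]]]] [A'y [b' [a' [Hb' Ha' Ey]]]]; subst x y.
        rewrite addrACA !fE //; by [apply: (sub_add HA) | apply: (sub_add HB)].
      move=> c x [A'x [b [a [Hb Ha Ex]]]]; subst x.
      rewrite scalerDr !fE //; by [apply: (sub_scal _ HA) | apply: (sub_scal _ HB)].
    move=> x y [A'x [b [a [Hb Ha Ex]]]] [A'y [b' [a' [Hb' Ha' Ey]]]].
    move=> Ebb; rewrite Ex Ey in Ebb; rewrite !fE // in Ebb.
    apply: (eq_decomp HA' HA HA'A A'x (sub_opp HA Ha) A'y (sub_opp HA Ha')).
    by rewrite Ex Ey !addrK.
  - by move=> x [A'x [b [a [Hb Ha Ex]]]]; subst x; rewrite fE.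
  - move=> b Hb; have [a [a' [Ha Ha' Eb]]] := HdA b.
    have Ea' : a' = b + - a by rewrite Eb [a + a']addrC addrK.
    exists a'; last by rewrite Ea' fE //; exact: sub_opp.
    by split=> //; exists b, (- a); split=> //; exact: sub_opp.
have [_ [K [HK HPK HdK]]] := H2 P B HP HBs Hiso.
split.
  split.
  - by exists 0, 0; rewrite addr0; split=> //; exact: sub0.
  - move=> x y [a [b [Ha Hb ->]]] [a' [b' [Ha' Hb' ->]]].
    exists (a + a'), (b + b'); split; [exact: (sub_add HA)|exact: (sub_add HB)|].
    by rewrite addrACA.
  - move=> c x [a [b [Ha Hb ->]]].
    exists (c *: a), (c *: b); split; [exact: (sub_scal _ HA)|exact: (sub_scal _ HB)|].
    by rewrite scalerDr.
exists (fun x => A' x /\ K x); split.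
- split; first by split; exact: sub0.
  + by move=> x y [? ?] [? ?]; split; [exact: (sub_add HA')|exact: (sub_add HK)].
  + by move=> c x [? ?]; split; [exact: (sub_scal _ HA')|exact: (sub_scal _ HK)].
- move=> x [a [b [Ha Hb Ex]]] [A'x Kx]; apply: HPK => //.
  by split=> //; exists b, a; split=> //; rewrite Ex addrC.
- move=> m; have [a0 [a1 [Ha0 Ha1 Em]]] := HdA m.
  have [p [k [[A'p [b [a2 [Hb Ha2 Ep]]]] Kk Ea1]]] := HdK a1.
  have Ek : k = a1 - p by rewrite Ea1 [p + k]addrC addrK.
  exists (a0 + a2 + b), k; split.
  + by exists (a0 + a2), b; split=> //; exact: (sub_add HA).
  + by split=> //; rewrite Ek; exact: (sub_sub HA').
  + by rewrite Em Ea1 Ep [b + a2]addrC !addrA.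
Qed.
End S.

Theorem theorem2p8 (R : pzRingType) (M : lmodType R^c) :
  qppi M -> (continuous M <-> quasi_continuous M).
Proof.
move=> Hq; split=> [[H1 H2]|[H1 H3]]; split=> //.
- exact: C2_C3.
- exact: qc_C2.
Qed.
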